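(* There exist a finitary weakly cartesian monad $T$ on $\mathsf{Set}$ and a $T$-algebra $(A,e)$ such that the bar construction $X=\mathrm{Bar}(T,A)$ contains an inner $2$-horn with two different fillers whose remaining $1$-faces are also different: there are $x,y\in X_1$ with $d_0x=d_1y$ and $z,z'\in X_2$ with $d_2z=d_2z'=x$, $d_0z=d_0z'=y$, and $d_1z\neq d_1z'$.
   Context: A monad $(T,\eta,\mu)$ on $\mathsf{Set}$ is weakly cartesian if $T$ preserves weak pullbacks and every naturality square of $\eta$ and of $\mu$ is a weak pullback (a commutative square of sets with $f:A\to B$, $g:A\to C$, $m:B\to D$, $n:C\to D$ is a weak pullback if for all $b,c$ with $m(b)=n(c)$ there is $a$ with $f(a)=b$, $g(a)=c$). The bar construction of a $T$-algebra $(A,e)$ is the simplicial set $X=\mathrm{Bar}(T,A)$ with $X_n=T^{n+1}A$, face maps $d_{n,0}=T^ne:T^{n+1}A\to T^nA$ and $d_{n,i}=T^{n-i}\mu_{T^{i-1}A}:T^{n+1}A\to T^nA$ for $1\le i\le n$, and degeneracy maps $s_{n,i}=T^{n-i+1}\eta_{T^iA}:T^{n+1}A\to T^{n+2}A$ for $0\le i\le n$. *)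

(* Defs.v *)
Record Monad := {
  T : Type -> Type;
  fmap : forall (A B : Type), (A -> B) -> T A -> T B;
  eta : forall (A : Type), A -> T A;
  mu : forall (A : Type), T (T A) -> T A;
  fmap_id : forall (A : Type) (t : T A), fmap A A (fun a => a) t = t;
  fmap_comp : forall (A B C : Type) (f : A -> B) (g : B -> C) (t : T A),
      fmap A C (fun a => g (f a)) t = fmap B C g (fmap A B f t);
  eta_nat : forall (A B : Type) (f : A -> B) (a : A),
      fmap A B f (eta A a) = eta B (f a);
  mu_nat : forall (A B : Type) (f : A -> B) (t : T (T A)),
      fmap A B f (mu A t) = mu B (fmap (T A) (T B) (fmap A B f) t);
  mu_eta_l : forall (A : Type) (t : T A), mu A (eta (T A) t) = t;
  mu_eta_r : forall (A : Type) (t : T A), mu A (fmap A (T A) (eta A) t) = t;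
  mu_assoc : forall (A : Type) (t : T (T (T A))),
      mu A (mu (T A) t) = mu A (fmap (T (T A)) (T A) (mu A) t)
}.

Arguments fmap _ {A B} _ _.
Arguments eta _ {A} _.
Arguments mu _ {A} _.

Definition weak_pullback {A B C D : Type}
  (f : A -> B) (g : A -> C) (m : B -> D) (n : C -> D) : Prop :=
  (forall a, m (f a) = n (g a)) /\
  (forall b c, m b = n c -> exists a, f a = b /\ g a = c).

Definition preserves_weak_pullbacks (M : Monad) : Prop :=
  forall (A B C D : Type) (f : A -> B) (g : A -> C) (m : B -> D) (n : C -> D),
    weak_pullback f g m n ->
    weak_pullback (fmap M f) (fmap M g) (fmap M m) (fmap M n).

Definition weakly_cartesian (M : Monad) : Prop :=
  preserves_weak_pullbacks M /\
  (forall (A B : Type) (f : A -> B),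
      weak_pullback f (@eta M A) (@eta M B) (fmap M f)) /\
  (forall (A B : Type) (f : A -> B),
      weak_pullback (fmap M (fmap M f)) (@mu M A) (@mu M B) (fmap M f)).

(** Finitary (preserves filtered colimits).  For Set-functors this is the
    standard (Adamek--Trnkova) condition: every element of T A lies in the
    image of T f for some map f from a finite set {0,...,n-1} into A. *)
Definition finitary (M : Monad) : Prop :=
  forall (A : Type) (t : T M A),
    exists (n : nat) (f : {i : nat | i < n} -> A) (s : T M {i : nat | i < n}),
      fmap M f s = t.

Definition is_algebra (M : Monad) (A : Type) (e : T M A -> A) : Prop :=
  (forall a : A, e (eta M a) = a) /\
  (forall t : T M (T M A), e (mu M t) = e (fmap M e t)).

Section Bar.
Variables (M : Monad) (A : Type) (e : T M A -> A).
Definition bar_d10 (x : T M (T M A)) : T M A := fmap M e x.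
Definition bar_d11 (x : T M (T M A)) : T M A := mu M x.
Definition bar_d20 (z : T M (T M (T M A))) : T M (T M A) := fmap M (fmap M e) z.
Definition bar_d21 (z : T M (T M (T M A))) : T M (T M A) := fmap M (@mu M A) z.
Definition bar_d22 (z : T M (T M (T M A))) : T M (T M A) := mu M z.
End Bar.

(* Main.v *)
Require Import Defs.
From Stdlib Require Import List Permutation Lia ClassicalEpsilon FunctionalExtensionality PropExtensionality ProofIrrelevance.
Import ListNotations.

Definition Bag (A : Type) : Type := { P : list A -> Prop | exists l, P = Permutation l }.

Definition mk {A} (l : list A) : Bag A := exist _ (Permutation l) (ex_intro _ l eq_refl).

Lemma sig_eq' {X : Type} (P : X -> Prop) (a b : X) pa pb :
  a = b -> exist P a pa = exist P b pb.
Proof. intros ->. f_equal. apply proof_irrelevance. Qed.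

Lemma mk_eq {A} (l l' : list A) : mk l = mk l' <-> Permutation l l'.
Proof.
  split.
  - intros H. apply (f_equal (@proj1_sig _ _)) in H. simpl in H.
    assert (Permutation l' l) by (rewrite <- H; apply Permutation_refl).
    now symmetry.
  - intros H. apply sig_eq'. apply functional_extensionality. intros x.
    apply propositional_extensionality. split; intros; eauto using Permutation_trans, Permutation_sym.
Qed.

Lemma mk_surj {A} (b : Bag A) : exists l, b = mk l.
Proof. destruct b as [P [l Hl]]. subst. exists l. apply sig_eq'. reflexivity. Qed.

Definition rep {A} (b : Bag A) : list A :=
  proj1_sig (constructive_indefinite_description _ (mk_surj b)).

Lemma rep_spec {A} (b : Bag A) : b = mk (rep b).
Proof. unfold rep. destruct constructive_indefinite_description. simpl. auto. Qed.

Lemma rep_mk {A} (l : list A) : Permutation l (rep (mk l)).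
Proof. apply mk_eq. apply rep_spec. Qed.

Definition bfmap {A B} (f : A -> B) (b : Bag A) : Bag B := mk (map f (rep b)).
Definition beta {A} (a : A) : Bag A := mk [a].
Definition bmu {A} (B : Bag (Bag A)) : Bag A := mk (concat (map rep (rep B))).

Lemma fmap_mk {A B} (f : A -> B) l : bfmap f (mk l) = mk (map f l).
Proof. unfold bfmap. apply mk_eq. apply Permutation_map. symmetry. apply rep_mk. Qed.

Lemma perm_concat {A} (L1 L2 : list (list A)) :
  Permutation L1 L2 -> Permutation (concat L1) (concat L2).
Proof.
  induction 1; simpl.
  - constructor.
  - apply Permutation_app_head; auto.
  - rewrite !app_assoc. apply Permutation_app_tail, Permutation_app_comm.
  - eauto using Permutation_trans.
Qed.

Lemma concat_rep_mk {A} (ls : list (list A)) :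
  Permutation (concat (map rep (map mk ls))) (concat ls).
Proof.
  induction ls; simpl. constructor.
  apply Permutation_app; auto. symmetry. apply rep_mk.
Qed.

Lemma mu_mk {A} (ls : list (list A)) : bmu (mk (map mk ls)) = mk (concat ls).
Proof.
  unfold bmu. apply mk_eq.
  eapply Permutation_trans; [|apply concat_rep_mk].
  apply perm_concat, Permutation_map. symmetry. apply rep_mk.
Qed.

Lemma map_mk_rep {A} (L : list (Bag A)) : map mk (map rep L) = L.
Proof. induction L; simpl; auto. rewrite IHL, <- rep_spec. auto. Qed.

Lemma bb_surj {A} (B : Bag (Bag A)) : exists ls, B = mk (map mk ls).
Proof. destruct (mk_surj B) as [L ->]. exists (map rep L). now rewrite map_mk_rep. Qed.

Lemma bbb_surj {A} (t : Bag (Bag (Bag A))) :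
  exists lss, t = mk (map mk (map (map mk) lss)).
Proof.
  destruct (bb_surj t) as [ls ->]. exists (map (map rep) ls).
  f_equal. f_equal. rewrite map_map. symmetry. rewrite <- (map_id ls) at 2.
  apply map_ext_in. intros l _. now rewrite map_mk_rep.
Qed.

Lemma concat_singl {A} (l : list A) : concat (map (fun a => [a]) l) = l.
Proof. induction l; simpl; f_equal; auto. Qed.

Lemma concat_concat' {A} (lss : list (list (list A))) :
  concat (concat lss) = concat (map (@concat A) lss).
Proof. induction lss; simpl; auto. rewrite concat_app. f_equal; auto. Qed.

Lemma map_map_mk {A B} (f : A -> B) ls :
  map (bfmap f) (map mk ls) = map mk (map (map f) ls).
Proof. rewrite !map_map. apply map_ext. intros. apply fmap_mk. Qed.

Definition BagM : Monad.
Proof.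
  refine {| T := Bag; fmap := @bfmap; eta := @beta; mu := @bmu |}.
  - intros A t. destruct (mk_surj t) as [l ->]. now rewrite fmap_mk, map_id.
  - intros A B C f g t. destruct (mk_surj t) as [l ->]. now rewrite !fmap_mk, map_map.
  - intros. unfold beta. now rewrite fmap_mk.
  - intros A B f t. destruct (bb_surj t) as [ls ->].
    rewrite mu_mk, !fmap_mk, map_map_mk, mu_mk, concat_map. auto.
  - intros A t. destruct (mk_surj t) as [l ->]. unfold beta.
    change [mk l] with (map mk [l]). rewrite mu_mk. simpl. now rewrite app_nil_r.
  - intros A t. destruct (mk_surj t) as [l ->]. rewrite fmap_mk. unfold beta.
    replace (map (fun a => mk [a]) l) with (map mk (map (fun a => [a]) l))
      by (now rewrite map_map). now rewrite mu_mk, concat_singl.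
  - intros A t. destruct (bbb_surj t) as [lss ->].
    rewrite mu_mk, <- concat_map, mu_mk, fmap_mk, map_map.
    replace (map (fun x => bmu (mk x)) (map (map mk) lss)) with (map mk (map (@concat A) lss)).
    + now rewrite mu_mk, concat_concat'.
    + rewrite !map_map. apply map_ext. intros. now rewrite mu_mk.
Defined.

Lemma list_fin {A} (l : list A) :
  exists (n : nat) (f : {i : nat | i < n} -> A) (s : list {i : nat | i < n}), map f s = l.
Proof.
  induction l as [|a l IH].
  - exists 0, (fun i => match PeanoNat.Nat.nlt_0_r _ (proj2_sig i) with end), []. auto.
  - destruct IH as [n [f [s Hs]]].
    pose (f' := fun i : {i : nat | i < S n} =>
      match Compare_dec.lt_dec (proj1_sig i) n with
      | left h => f (exist _ (proj1_sig i) h) | right _ => a end).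
    pose (lift := fun i : {i : nat | i < n} =>
      exist (fun j => j < S n) (proj1_sig i) (PeanoNat.Nat.lt_lt_succ_r _ _ (proj2_sig i))).
    exists (S n), f', (exist _ n (PeanoNat.Nat.lt_succ_diag_r n) :: map lift s).
    simpl. f_equal.
    + unfold f'. simpl. destruct Compare_dec.lt_dec; [lia|auto].
    + rewrite <- Hs, map_map. apply map_ext. intros [i h]. unfold f', lift. simpl.
      destruct Compare_dec.lt_dec; [|lia]. f_equal. apply sig_eq'. auto.
Qed.

Lemma BagM_finitary : finitary BagM.
Proof.
  intros A t. simpl in t. destruct (mk_surj t) as [l ->].
  destruct (list_fin l) as [n [f [s Hs]]]. exists n, f, (mk s). simpl.
  now rewrite fmap_mk, Hs.
Qed.

Lemma wp_list {A B C D} (f : A -> B) (g : A -> C) (m : B -> D) (n : C -> D) :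
  weak_pullback f g m n -> forall lb lc, Permutation (map m lb) (map n lc) ->
  exists la, Permutation (map f la) lb /\ Permutation (map g la) lc.
Proof.
  intros [_ Hw] lb. induction lb as [|b lb IH]; intros lc Hp.
  - simpl in Hp. apply Permutation_nil in Hp. destruct lc; [|discriminate].
    exists []. auto.
  - simpl in Hp. assert (Hin : In (m b) (map n lc)).
    { eapply Permutation_in. apply Hp. left; auto. }
    apply in_map_iff in Hin. destruct Hin as [c [Hc Hinc]].
    apply in_split in Hinc. destruct Hinc as [l1 [l2 ->]].
    rewrite map_app in Hp. simpl in Hp. rewrite <- Hc in Hp.
    apply Permutation_cons_app_inv in Hp. rewrite <- map_app in Hp.
    destruct (IH _ Hp) as [la [H1 H2]].
    destruct (Hw b c (eq_sym Hc)) as [a [Ha1 Ha2]].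
    exists (a :: la). simpl. split.
    + rewrite Ha1. auto.
    + rewrite Ha2. eapply Permutation_trans; [apply Permutation_cons; [reflexivity|apply H2]|].
      apply Permutation_middle.
Qed.

Lemma split_concat {A B} (f : A -> B) (ls : list (list B)) (la : list A) :
  map f la = concat ls -> exists lsA, map (map f) lsA = ls /\ concat lsA = la.
Proof.
  revert la. induction ls as [|l ls IH]; intros la H.
  - exists []. simpl in *. destruct la; [auto|discriminate].
  - simpl in H. apply map_eq_app in H. destruct H as [l1 [l2 [-> [H1 H2]]]].
    destruct (IH _ H2) as [lsA [E1 E2]]. exists (l1 :: lsA). simpl. subst. auto.
Qed.

Lemma BagM_wc : weakly_cartesian BagM.
Proof.
  split; [|split].
  - intros A B C D f g m n Hw. split.
    + intros a. simpl in *. destruct (mk_surj a) as [l ->]. rewrite !fmap_mk, !map_map.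
      f_equal. apply map_ext. apply (proj1 Hw).
    + simpl. intros b c H. destruct (mk_surj b) as [lb ->]. destruct (mk_surj c) as [lc ->].
      rewrite !fmap_mk in H. apply mk_eq in H.
      destruct (wp_list f g m n Hw lb lc H) as [la [H1 H2]].
      exists (mk la). rewrite !fmap_mk. split; apply mk_eq; auto.
  - intros A B f. split.
    + intros a. simpl. unfold beta. now rewrite fmap_mk.
    + simpl. intros b t H. destruct (mk_surj t) as [l ->]. unfold beta in H.
      rewrite fmap_mk in H. apply mk_eq, Permutation_length_1_inv in H.
      destruct l as [|a [|]]; try discriminate. injection H as <-.
      exists a. auto.
  - intros A B f. split.
    + intros a. simpl. symmetry. apply (mu_nat BagM).
    + simpl. intros G h H. destruct (bb_surj G) as [ls ->]. destruct (mk_surj h) as [la ->].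
      rewrite mu_mk, fmap_mk in H. apply mk_eq in H.
      destruct (Permutation_map_inv f la H) as [la' [E P]].
      destruct (split_concat f ls la' (eq_sym E)) as [lsA [E1 E2]].
      exists (mk (map mk lsA)). rewrite fmap_mk, map_map_mk, E1, mu_mk, E2.
      split; auto. apply mk_eq. symmetry; auto.
Qed.

Definition u (n : nat) : Bag unit := mk (repeat tt n).

Lemma mu_units (ns : list nat) : bmu (mk (map u ns)) = u (list_sum ns).
Proof.
  replace (map u ns) with (map mk (map (fun n => repeat tt n) ns)) by (now rewrite map_map).
  rewrite mu_mk. unfold u. f_equal. induction ns; simpl; auto.
  now rewrite repeat_app, IHns.
Qed.

Lemma u_inj n m : u n = u m -> n = m.
Proof.
  intros H. apply mk_eq, Permutation_length in H. now rewrite !repeat_length in H.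
Qed.

Theorem theorem4p6 :
  exists M : Monad, finitary M /\ weakly_cartesian M /\
    exists (A : Type) (e : T M A -> A), is_algebra M A e /\
      exists (x y : T M (T M A)) (z z' : T M (T M (T M A))),
        bar_d10 M A e x = bar_d11 M A y /\
        bar_d22 M A z = x /\ bar_d22 M A z' = x /\
        bar_d20 M A e z = y /\ bar_d20 M A e z' = y /\
        bar_d21 M A z <> bar_d21 M A z'.
Proof.
  exists BagM. split; [apply BagM_finitary|]. split; [apply BagM_wc|].
  exists unit, (fun _ => tt). split.
  { split; intros; [destruct a|]; reflexivity. }
  exists (mk [u 1; u 1; u 2; u 2]), (mk [u 2; u 2]),
    (mk [mk [u 1; u 1]; mk [u 2; u 2]]), (mk [mk [u 1; u 2]; mk [u 1; u 2]]).
  unfold bar_d10, bar_d11, bar_d20, bar_d21, bar_d22. simpl.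
  split; [|split; [|split; [|split; [|split]]]].
  - rewrite fmap_mk. change [u 2; u 2] with (map u [2;2]). rewrite mu_units. reflexivity.
  - change [mk [u 1; u 1]; mk [u 2; u 2]] with (map mk [[u 1; u 1]; [u 2; u 2]]).
    rewrite mu_mk. reflexivity.
  - change [mk [u 1; u 2]; mk [u 1; u 2]] with (map mk [[u 1; u 2]; [u 1; u 2]]).
    rewrite mu_mk. apply mk_eq. simpl. apply perm_skip. apply perm_swap.
  - rewrite fmap_mk. simpl. rewrite !fmap_mk. reflexivity.
  - rewrite fmap_mk. simpl. rewrite !fmap_mk. reflexivity.
  - rewrite !fmap_mk. simpl.
    change [u 1; u 1] with (map u [1;1]). change [u 2; u 2] with (map u [2;2]).
    change [u 1; u 2] with (map u [1;2]). rewrite !mu_units. simpl.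
    intros H. apply mk_eq in H. apply (Permutation_in (u 2)) in H; [|left; auto].
    destruct H as [H|[H|[]]]; apply u_inj in H; discriminate.
Qed.
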